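(* Let $a>0$, $a\neq1$, and let $\mathcal{G}$ be the real Lie algebra with basis $X_1,X_2,X_3$ and brackets $[X_1,X_2]=-aX_2-X_3$, $[X_2,X_3]=0$, $[X_3,X_1]=X_2+aX_3$ (Bianchi type $VI_a$). Every real Manin triple $(\mathcal{D},\mathcal{G}',\tilde{\mathcal{G}}')$ with $\mathcal{G}'\cong\mathcal{G}$ is isomorphic to exactly one Manin triple $(\mathcal{D},\mathcal{G},\tilde{\mathcal{G}})$ in which $\tilde{\mathcal{G}}$, in the basis $\tilde X^1,\tilde X^2,\tilde X^3$ dual to $X_1,X_2,X_3$, has one of the following bracket structures: (a) (Bianchi $I$) all brackets zero; (b) (Bianchi $II$) $[\tilde X^1,\tilde X^2]=0$, $[\tilde X^2,\tilde X^3]=\tilde X^1$, $[\tilde X^3,\tilde X^1]=0$; (c) (Bianchi $VI_{1/a}$) (i) $[\tilde X^1,\tilde X^2]=-b(\tfrac1a\tilde X^2+\tilde X^3)$, $[\tilde X^2,\tilde X^3]=0$, $[\tilde X^3,\tilde X^1]=b(\tilde X^2+\tfrac1a\tilde X^3)$, $b\in\mathbb{R}\setminus\{0\}$; (ii) $[\tilde X^1,\tilde X^2]=\tilde X^1$, $[\tilde X^2,\tilde X^3]=\tfrac{a+1}{a-1}(\tilde X^2+\tilde X^3)$, $[\tilde X^3,\tilde X^1]=\tilde X^1$; (iii) $[\tilde X^1,\tilde X^2]=\tilde X^1$, $[\tilde X^2,\tilde X^3]=\tfrac{a-1}{a+1}(-\tilde X^2+\tilde X^3)$, $[\tilde X^3,\tilde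 X^1]=-\tilde X^1$.
   Context: A real Manin triple $(\mathcal{D},\mathcal{G},\tilde{\mathcal{G}})$ consists of a real Lie algebra $\mathcal{D}$ with a symmetric, ad-invariant, nondegenerate bilinear form $\langle\cdot,\cdot\rangle$, and two maximally isotropic Lie subalgebras $\mathcal{G},\tilde{\mathcal{G}}$ with $\mathcal{D}=\mathcal{G}\oplus\tilde{\mathcal{G}}$ as vector spaces; here $\dim\mathcal{D}=6$, $\dim\mathcal{G}=\dim\tilde{\mathcal{G}}=3$. Bases $X_i$ of $\mathcal{G}$ and $\tilde X^i$ of $\tilde{\mathcal{G}}$ are dual if $\langle X_i,X_j\rangle=0$, $\langle X_i,\tilde X^j\rangle=\delta_i^j$, $\langle\tilde X^i,\tilde X^j\rangle=0$. If $[X_i,X_j]=f_{ij}{}^kX_k$ and $[\tilde X^i,\tilde X^j]=\tilde f^{ij}{}_k\tilde X^k$, ad-invariance forces $[X_i,\tilde X^j]=f_{ki}{}^j\tilde X^k+\tilde f^{jk}{}_iX_k$, so the triple is determined by the brackets of $\mathcal{G}$ and $\tilde{\mathcal{G}}$ in dual bases. Two Manin triples are isomorphic if there is a Lie algebra isomorphism of the doubles preserving the bilinear forms and mapping first subalgebra to first subalgebra and second to second; equivalently, they are related by a change of basis $X_i'=X_kA^k{}_i$, $\tilde X'^j=(A^{-1})^j{}_k\tilde X^k$. Different values of the parameter $b$ give non-isomorphic triples. *)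

(* Defs.v *)
From mathcomp Require Import all_boot all_order all_algebra.
From mathcomp Require Import reals.
Set Implicit Arguments. Unset Strict Implicit. Unset Printing Implicit Defensive.
Import Order.TTheory GRing.Theory Num.Theory.
Local Open Scope ring_scope.

(* Structure constants of a 3-dimensional algebra with basis indexed by 'I_3
   (index 0,1,2 stand for X_1,X_2,X_3):  [X_i, X_j] = \sum_k f i j k X_k. *)
Definition sc (R : ringType) := 'I_3 -> 'I_3 -> 'I_3 -> R.

Definition sc_eq (R : ringType) (f g : sc R) := forall i j k, f i j k = g i j k.

(* Elements of the double D = G (+) G~ in coordinates: (u, xi) stands for
   \sum_i u_i X_i + \sum_i xi_i X~^i. *)
Definition dbl (R : ringType) := ('rV[R]_3 * 'rV[R]_3)%type.

Definition dadd (R : ringType) (x y : dbl R) : dbl R := (x.1 + y.1, x.2 + y.2).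

(* The bracket of the double determined by f (brackets of G in the basis X_i)
   and ft (brackets of G~ in the dual basis X~^i), using
   [X_i,X_j] = f_ij^k X_k, [X~^i,X~^j] = ft^ij_k X~^k,
   [X_i,X~^j] = f_ki^j X~^k + ft^jk_i X_k,  [X~^j,X_i] = - [X_i,X~^j]. *)
Definition dbr (R : comRingType) (f ft : sc R) (x y : dbl R) : dbl R :=
  let u := x.1 in let xi := x.2 in let v := y.1 in let eta := y.2 in
  (\row_k (\sum_i \sum_j u 0 i * v 0 j * f i j k
           + \sum_i \sum_j u 0 i * eta 0 j * ft j k i
           - \sum_i \sum_j xi 0 j * v 0 i * ft j k i),
   \row_k (\sum_i \sum_j xi 0 i * eta 0 j * ft i j k
           + \sum_i \sum_j u 0 i * eta 0 j * f k i j
           - \sum_i \sum_j xi 0 j * v 0 i * f k i j)).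

(* (D, G, G~) with the above bracket is a Manin triple: the bracket is a Lie
   bracket (alternating + Jacobi).  The canonical pairing is then automatically
   symmetric, nondegenerate, ad-invariant, and G, G~ are maximally isotropic
   subalgebras (every real Manin triple of dim 6 arises this way after choosing
   dual bases). *)
Definition is_manin (R : comRingType) (f ft : sc R) : Prop :=
  (forall x : dbl R, dbr f ft x x = (0, 0)) /\
  (forall x y z : dbl R,
      dadd (dadd (dbr f ft x (dbr f ft y z)) (dbr f ft y (dbr f ft z x)))
           (dbr f ft z (dbr f ft x y)) = (0, 0)).

(* Change of basis X'_i = \sum_k X_k M_ki : new structure constants
   f'_ij^k = \sum M_pi M_qj f_pq^r (M^-1)_kr. *)
Definition chg (R : comUnitRingType) (M : 'M[R]_3) (f : sc R) : sc R :=
  fun i j k => \sum_p \sum_q \sum_r M p i * M q j * f p q r * invmx M k r.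

(* Isomorphism of Manin triples given in dual bases: a change of basis A of
   the first subalgebra, X'_i = X_k A^k_i, X~'^j = (A^-1)^j_k X~^k. *)
Definition manin_iso (R : comUnitRingType) (f1 ft1 f2 ft2 : sc R) : Prop :=
  exists A : 'M[R]_3, A \in unitmx /\
    sc_eq (chg A f1) f2 /\ sc_eq (chg (invmx A)^T ft1) ft2.

Definition lie_iso (R : comUnitRingType) (f1 f2 : sc R) : Prop :=
  exists A : 'M[R]_3, A \in unitmx /\ sc_eq (chg A f1) f2.

Definition vec3 (R : ringType) (x y z : R) : 'I_3 -> R :=
  fun k => if val k == 0%N then x else if val k == 1%N then y else z.

Definition mk_sc (R : ringType) (v12 v23 v31 : 'I_3 -> R) : sc R :=
  fun i j k =>
    let i' := val i in let j' := val j in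
    if (i' == 0%N) && (j' == 1%N) then v12 k
    else if (i' == 1%N) && (j' == 0%N) then - v12 k
    else if (i' == 1%N) && (j' == 2%N) then v23 k
    else if (i' == 2%N) && (j' == 1%N) then - v23 k
    else if (i' == 2%N) && (j' == 0%N) then v31 k
    else if (i' == 0%N) && (j' == 2%N) then - v31 k
    else 0.

Section Bianchi.
Variable R : realType.
Variable a : R.

Definition bianchiVIa : sc R :=
  mk_sc (vec3 0 (- a) (-1)) (vec3 0 0 0) (vec3 0 1 a).

Definition dual_I : sc R := mk_sc (vec3 0 0 0) (vec3 0 0 0) (vec3 0 0 0).
Definition dual_II : sc R := mk_sc (vec3 0 0 0) (vec3 1 0 0) (vec3 0 0 0).
Definition dual_VI_i (b : R) : sc R :=
  mk_sc (vec3 0 (- (b / a)) (- b)) (vec3 0 0 0) (vec3 0 b (b / a)).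
Definition dual_VI_ii : sc R :=
  mk_sc (vec3 1 0 0) (vec3 0 ((a + 1) / (a - 1)) ((a + 1) / (a - 1)))
        (vec3 1 0 0).
Definition dual_VI_iii : sc R :=
  mk_sc (vec3 1 0 0) (vec3 0 (- ((a - 1) / (a + 1))) ((a - 1) / (a + 1)))
        (vec3 (-1) 0 0).

Definition in_dual_list (ft : sc R) : Prop :=
  sc_eq ft dual_I \/ sc_eq ft dual_II \/
  (exists b : R, b != 0 /\ sc_eq ft (dual_VI_i b)) \/
  sc_eq ft dual_VI_ii \/ sc_eq ft dual_VI_iii.
End Bianchi.

(* Main.v *)
Require Import Defs.
From mathcomp Require Import all_boot all_order all_algebra.
From mathcomp Require Import reals ring.
Import Order.TTheory GRing.Theory Num.Theory.
Local Open Scope ring_scope.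
Set Implicit Arguments. Unset Strict Implicit. Unset Printing Implicit Defensive.


Definition o0 : 'I_3 := @Ordinal 3 0 isT.
Definition o1 : 'I_3 := @Ordinal 3 1 isT.
Definition o2 : 'I_3 := @Ordinal 3 2 isT.

Lemma sum3 (R : nmodType) (F : 'I_3 -> R) : \sum_(i < 3) F i = F o0 + F o1 + F o2.
Proof.
rewrite !big_ord_recr big_ord0 /= add0r.
by congr (F _ + F _ + F _); apply: val_inj.
Qed.

Lemma inv_uniq (R : comUnitRingType) n (A B : 'M[R]_n) : A *m B = 1%:M -> invmx A = B.
Proof.
move=> AB; have [uA _] := mulmx1_unit AB.
by rewrite -[invmx A]mulmx1 -AB mulmxA mulVmx // mul1mx.
Qed.

Lemma invM (R : comUnitRingType) n (A B : 'M[R]_n) : A \in unitmx -> B \in unitmx ->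
  invmx (A *m B) = invmx B *m invmx A.
Proof.
move=> uA uB; apply: inv_uniq.
by rewrite mulmxA -(mulmxA A) mulmxV // mulmx1 mulmxV.
Qed.

Lemma mul3E (R : comUnitRingType) m n (A : 'M[R]_(m,3)) (B : 'M[R]_(3,n)) i j :
  (A *m B) i j = A i o0 * B o0 j + A i o1 * B o1 j + A i o2 * B o2 j.
Proof. by rewrite mxE sum3. Qed.

Definition chgT (R : comUnitRingType) (M N : 'M[R]_3) (f : sc R) i j k :=
  \sum_p \sum_q \sum_r M p i * M q j * f p q r * N k r.

Lemma chgTE (R : comUnitRingType) (M N : 'M[R]_3) f i j k :
  chgT M N f i j k = 
M o0 i * M o0 j * f o0 o0 o0 * N k o0 +
  M o0 i * M o0 j * f o0 o0 o1 * N k o1 +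
  M o0 i * M o0 j * f o0 o0 o2 * N k o2 +
  M o0 i * M o1 j * f o0 o1 o0 * N k o0 +
  M o0 i * M o1 j * f o0 o1 o1 * N k o1 +
  M o0 i * M o1 j * f o0 o1 o2 * N k o2 +
  M o0 i * M o2 j * f o0 o2 o0 * N k o0 +
  M o0 i * M o2 j * f o0 o2 o1 * N k o1 +
  M o0 i * M o2 j * f o0 o2 o2 * N k o2 +
  M o1 i * M o0 j * f o1 o0 o0 * N k o0 +
  M o1 i * M o0 j * f o1 o0 o1 * N k o1 +
  M o1 i * M o0 j * f o1 o0 o2 * N k o2 +
  M o1 i * M o1 j * f o1 o1 o0 * N k o0 +
  M o1 i * M o1 j * f o1 o1 o1 * N k o1 +
  M o1 i * M o1 j * f o1 o1 o2 * N k o2 +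
  M o1 i * M o2 j * f o1 o2 o0 * N k o0 +
  M o1 i * M o2 j * f o1 o2 o1 * N k o1 +
  M o1 i * M o2 j * f o1 o2 o2 * N k o2 +
  M o2 i * M o0 j * f o2 o0 o0 * N k o0 +
  M o2 i * M o0 j * f o2 o0 o1 * N k o1 +
  M o2 i * M o0 j * f o2 o0 o2 * N k o2 +
  M o2 i * M o1 j * f o2 o1 o0 * N k o0 +
  M o2 i * M o1 j * f o2 o1 o1 * N k o1 +
  M o2 i * M o1 j * f o2 o1 o2 * N k o2 +
  M o2 i * M o2 j * f o2 o2 o0 * N k o0 +
  M o2 i * M o2 j * f o2 o2 o1 * N k o1 +
  M o2 i * M o2 j * f o2 o2 o2 * N k o2.
Proof.
rewrite /chgT; under eq_bigr do under eq_bigr do rewrite sum3.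
under eq_bigr do rewrite sum3.
rewrite sum3; rewrite !addrA //.
Qed.

Lemma chgE (R : comUnitRingType) (M : 'M[R]_3) f i j k :
  chg M f i j k = chgT M (invmx M) f i j k.
Proof. by []. Qed.


Lemma dbr1E (R : comRingType) (f ft : sc R) (x y : dbl R) k :
  (dbr f ft x y).1 0 k = (x.1 0 o0 * y.1 0 o0 * f o0 o0 k + x.1 0 o0 * y.1 0 o1 * f o0 o1 k + x.1 0 o0 * y.1 0 o2 * f o0 o2 k + x.1 0 o1 * y.1 0 o0 * f o1 o0 k + x.1 0 o1 * y.1 0 o1 * f o1 o1 k + x.1 0 o1 * y.1 0 o2 * f o1 o2 k + x.1 0 o2 * y.1 0 o0 * f o2 o0 k + x.1 0 o2 * y.1 0 o1 * f o2 o1 k + x.1 0 o2 * y.1 0 o2 * f o2 o2 k)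
  + (x.1 0 o0 * y.2 0 o0 * ft o0 k o0 + x.1 0 o0 * y.2 0 o1 * ft o1 k o0 + x.1 0 o0 * y.2 0 o2 * ft o2 k o0 + x.1 0 o1 * y.2 0 o0 * ft o0 k o1 + x.1 0 o1 * y.2 0 o1 * ft o1 k o1 + x.1 0 o1 * y.2 0 o2 * ft o2 k o1 + x.1 0 o2 * y.2 0 o0 * ft o0 k o2 + x.1 0 o2 * y.2 0 o1 * ft o1 k o2 + x.1 0 o2 * y.2 0 o2 * ft o2 k o2)
  - (x.2 0 o0 * y.1 0 o0 * ft o0 k o0 + x.2 0 o1 * y.1 0 o0 * ft o1 k o0 + x.2 0 o2 * y.1 0 o0 * ft o2 k o0 + x.2 0 o0 * y.1 0 o1 * ft o0 k o1 + x.2 0 o1 * y.1 0 o1 * ft o1 k o1 + x.2 0 o2 * y.1 0 o1 * ft o2 k o1 + x.2 0 o0 * y.1 0 o2 * ft o0 k o2 + x.2 0 o1 * y.1 0 o2 * ft o1 k o2 + x.2 0 o2 * y.1 0 o2 * ft o2 k o2).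
Proof. rewrite /dbr mxE !sum3 !addrA //. Qed.

Lemma dbr2E (R : comRingType) (f ft : sc R) (x y : dbl R) k :
  (dbr f ft x y).2 0 k = (x.2 0 o0 * y.2 0 o0 * ft o0 o0 k + x.2 0 o0 * y.2 0 o1 * ft o0 o1 k + x.2 0 o0 * y.2 0 o2 * ft o0 o2 k + x.2 0 o1 * y.2 0 o0 * ft o1 o0 k + x.2 0 o1 * y.2 0 o1 * ft o1 o1 k + x.2 0 o1 * y.2 0 o2 * ft o1 o2 k + x.2 0 o2 * y.2 0 o0 * ft o2 o0 k + x.2 0 o2 * y.2 0 o1 * ft o2 o1 k + x.2 0 o2 * y.2 0 o2 * ft o2 o2 k)
  + (x.1 0 o0 * y.2 0 o0 * f k o0 o0 + x.1 0 o0 * y.2 0 o1 * f k o0 o1 + x.1 0 o0 * y.2 0 o2 * f k o0 o2 + x.1 0 o1 * y.2 0 o0 * f k o1 o0 + x.1 0 o1 * y.2 0 o1 * f k o1 o1 + x.1 0 o1 * y.2 0 o2 * f k o1 o2 + x.1 0 o2 * y.2 0 o0 * f k o2 o0 + x.1 0 o2 * y.2 0 o1 * f k o2 o1 + x.1 0 o2 * y.2 0 o2 * f k o2 o2)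
  - (x.2 0 o0 * y.1 0 o0 * f k o0 o0 + x.2 0 o1 * y.1 0 o0 * f k o0 o1 + x.2 0 o2 * y.1 0 o0 * f k o0 o2 + x.2 0 o0 * y.1 0 o1 * f k o1 o0 + x.2 0 o1 * y.1 0 o1 * f k o1 o1 + x.2 0 o2 * y.1 0 o1 * f k o1 o2 + x.2 0 o0 * y.1 0 o2 * f k o2 o0 + x.2 0 o1 * y.1 0 o2 * f k o2 o1 + x.2 0 o2 * y.1 0 o2 * f k o2 o2).
Proof. rewrite /dbr mxE !sum3 !addrA //. Qed.

Definition eb {R : ringType} (i : 'I_3) : 'rV[R]_3 := \row_j (i == j)%:R.

Lemma ord3P (P : 'I_3 -> Prop) : P o0 -> P o1 -> P o2 -> forall i, P i.
Proof.
move=> H0 H1 H2 [[|[|[|n]]] Hn] //.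
- by have -> : Ordinal Hn = o0 by apply: val_inj.
- by have -> : Ordinal Hn = o1 by apply: val_inj.
- by have -> : Ordinal Hn = o2 by apply: val_inj.
Qed.

Lemma dbrX (R : comRingType) (f ft : sc R) (i : 'I_3) (y : dbl R) :
  dbr f ft (eb i, 0) y = (\row_k (\sum_j y.1 0 j * f i j k + \sum_j y.2 0 j * ft j k i),
                          \row_k \sum_j y.2 0 j * f k i j).
Proof.
congr pair; apply/rowP => k; rewrite ?dbr1E ?dbr2E !mxE !sum3 /=;
elim/ord3P: i; rewrite ?mxE /=; ring.
Qed.

Lemma dbrT (R : comRingType) (f ft : sc R) (i : 'I_3) (y : dbl R) :
  dbr f ft (0, eb i) y = (\row_k (- \sum_j y.1 0 j * ft i k j),
                          \row_k (\sum_j y.2 0 j * ft i j k - \sum_j y.1 0 j * f k j i)).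
Proof.
congr pair; apply/rowP => k; rewrite ?dbr1E ?dbr2E !mxE !sum3 /=;
elim/ord3P: i; rewrite ?mxE /=; ring.
Qed.

Lemma dbrX3 (R : comRingType) (f ft : sc R) (i : 'I_3) (y : dbl R) :
  dbr f ft (eb i, 0) y = (\row_k (y.1 0 o0 * f i o0 k + y.1 0 o1 * f i o1 k + y.1 0 o2 * f i o2 k
                           + (y.2 0 o0 * ft o0 k i + y.2 0 o1 * ft o1 k i + y.2 0 o2 * ft o2 k i)),
                          \row_k (y.2 0 o0 * f k i o0 + y.2 0 o1 * f k i o1 + y.2 0 o2 * f k i o2)).
Proof. by rewrite dbrX; congr pair; apply/rowP => k; rewrite !mxE !sum3. Qed.

Lemma dbrT3 (R : comRingType) (f ft : sc R) (i : 'I_3) (y : dbl R) :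
  dbr f ft (0, eb i) y = (\row_k (- (y.1 0 o0 * ft i k o0 + y.1 0 o1 * ft i k o1 + y.1 0 o2 * ft i k o2)),
                          \row_k ((y.2 0 o0 * ft i o0 k + y.2 0 o1 * ft i o1 k + y.2 0 o2 * ft i o2 k)
                            - (y.1 0 o0 * f k o0 i + y.1 0 o1 * f k o1 i + y.1 0 o2 * f k o2 i))).
Proof. by rewrite dbrT; congr pair; apply/rowP => k; rewrite !mxE !sum3. Qed.

Lemma dadd1 (R : ringType) (x y : dbl R) k : (dadd x y).1 0 k = x.1 0 k + y.1 0 k.
Proof. by rewrite /dadd /= mxE. Qed.
Lemma dadd2 (R : ringType) (x y : dbl R) k : (dadd x y).2 0 k = x.2 0 k + y.2 0 k.
Proof. by rewrite /dadd /= mxE. Qed.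
Lemma mx0E (R : ringType) m n i j : (0 : 'M[R]_(m,n)) i j = 0.
Proof. by rewrite mxE. Qed.
Lemma ebE (R : ringType) (i j : 'I_3) : (eb i : 'rV[R]_3) 0 j = (i == j)%:R.
Proof. by rewrite mxE. Qed.

Lemma comb1 (R : comRingType) (x1 y : R) c1 :
  x1 = 0 -> y = c1 * x1 -> y = 0.
Proof. by move=> -> ->; rewrite mulr0. Qed.
Lemma comb2 (R : comRingType) (x1 x2 y : R) c1 c2 :
  x1 = 0 -> x2 = 0 -> y = c1 * x1 + c2 * x2 -> y = 0.
Proof. by move=> -> -> ->; rewrite !mulr0 addr0. Qed.
Lemma comb3 (R : comRingType) (x1 x2 x3 y : R) c1 c2 c3 :
  x1 = 0 -> x2 = 0 -> x3 = 0 -> y = c1 * x1 + c2 * x2 + c3 * x3 -> y = 0.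
Proof. by move=> -> -> -> ->; rewrite !mulr0 !addr0. Qed.
Lemma eq_sub0 (R : comRingType) (x y : R) : x - y = 0 -> x = y.
Proof. by move/eqP; rewrite subr_eq0 => /eqP. Qed.

Lemma antisym (R : comRingType) (f g : sc R) :
  (forall x : dbl R, dbr f g x x = (0, 0)) ->
  (forall i j k, g i j k = - g j i k).
Proof.
move=> H0 i j k.
have := H0 (0, eb i + eb j).
move/(congr1 (fun p : dbl R => p.2 0 k)).
rewrite dbr2E /= !mxE /=.
have := H0 (0, eb i); move/(congr1 (fun p : dbl R => p.2 0 k)).
rewrite dbr2E /= !mxE /=.
have := H0 (0, eb j); move/(congr1 (fun p : dbl R => p.2 0 k)).
rewrite dbr2E /= !mxE /=.
move=> E3 E2 E1; apply: eq_sub0.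
move: E1 E2 E3.
elim/ord3P: i; elim/ord3P: j => /= E1 E2 E3; apply: (comb3 (c1:=1) (c2:=-1) (c3:=-1) E1 E2 E3); ring.
Qed.

Lemma diag0 (R : comRingType) (f g : sc R) :
  (forall x : dbl R, dbr f g x x = (0, 0)) ->
  (forall i k, g i i k = 0).
Proof.
move=> H0 i k.
have := H0 (0, eb i); move/(congr1 (fun p : dbl R => p.2 0 k)).
rewrite dbr2E /= !mxE /=.
elim/ord3P: i => /= E1; apply: (comb1 (c1:=1) E1); ring.
Qed.

Definition G9 (R : ringType) (A0 A1 A2 B0 B1 B2 C0 C1 C2 : R) : sc R :=
  mk_sc (vec3 A0 A1 A2) (vec3 B0 B1 B2) (vec3 C0 C1 C2).

Lemma g_param (R : comRingType) (f g : sc R) :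
  (forall x : dbl R, dbr f g x x = (0, 0)) ->
  sc_eq g (G9 (g o0 o1 o0) (g o0 o1 o1) (g o0 o1 o2) (g o1 o2 o0) (g o1 o2 o1) (g o1 o2 o2)
              (g o2 o0 o0) (g o2 o0 o1) (g o2 o0 o2)).
Proof.
move=> H0 i j k; have As := antisym H0; have D := diag0 H0.
by elim/ord3P: i; elim/ord3P: j; elim/ord3P: k; rewrite /G9 /mk_sc /vec3 /= ?D // As.
Qed.

Definition zr {R : ringType} : 'rV[R]_3 := \row_j 0.
Lemma zrE (R : ringType) j : (zr : 'rV[R]_3) 0 j = 0.
Proof. by rewrite mxE. Qed.

Lemma dbrX3' (R : comRingType) (f ft : sc R) (i : 'I_3) (y : dbl R) :
  dbr f ft (eb i, zr) y = (\row_k (y.1 0 o0 * f i o0 k + y.1 0 o1 * f i o1 k + y.1 0 o2 * f i o2 k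
                           + (y.2 0 o0 * ft o0 k i + y.2 0 o1 * ft o1 k i + y.2 0 o2 * ft o2 k i)),
                          \row_k (y.2 0 o0 * f k i o0 + y.2 0 o1 * f k i o1 + y.2 0 o2 * f k i o2)).
Proof.
have -> : (zr : 'rV[R]_3) = 0 by apply/rowP => j; rewrite !mxE.
exact: dbrX3.
Qed.

Lemma dbrT3' (R : comRingType) (f ft : sc R) (i : 'I_3) (y : dbl R) :
  dbr f ft (zr, eb i) y = (\row_k (- (y.1 0 o0 * ft i k o0 + y.1 0 o1 * ft i k o1 + y.1 0 o2 * ft i k o2)),
                          \row_k ((y.2 0 o0 * ft i o0 k + y.2 0 o1 * ft i o1 k + y.2 0 o2 * ft i o2 k)
                            - (y.1 0 o0 * f k o0 i + y.1 0 o1 * f k o1 i + y.1 0 o2 * f k o2 i))).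
Proof.
have -> : (zr : 'rV[R]_3) = 0 by apply/rowP => j; rewrite !mxE.
exact: dbrT3.
Qed.

Lemma rowE (R : ringType) (F : 'I_3 -> R) k : fun_of_matrix (\row_j F j : 'rV[R]_3) 0 k = F k.
Proof. by rewrite mxE. Qed.

Lemma bX1 (R : comRingType) (f ft : sc R) (i : 'I_3) (y : dbl R) k :
  (dbr f ft (eb i, zr) y).1 0 k = y.1 0 o0 * f i o0 k + y.1 0 o1 * f i o1 k + y.1 0 o2 * f i o2 k
                           + (y.2 0 o0 * ft o0 k i + y.2 0 o1 * ft o1 k i + y.2 0 o2 * ft o2 k i).
Proof. by rewrite dbrX3' mxE. Qed.
Lemma bX2 (R : comRingType) (f ft : sc R) (i : 'I_3) (y : dbl R) k :
  (dbr f ft (eb i, zr) y).2 0 k = y.2 0 o0 * f k i o0 + y.2 0 o1 * f k i o1 + y.2 0 o2 * f k i o2.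
Proof. by rewrite dbrX3' mxE. Qed.
Lemma bT1 (R : comRingType) (f ft : sc R) (i : 'I_3) (y : dbl R) k :
  (dbr f ft (zr, eb i) y).1 0 k = - (y.1 0 o0 * ft i k o0 + y.1 0 o1 * ft i k o1 + y.1 0 o2 * ft i k o2).
Proof. by rewrite dbrT3' mxE. Qed.
Lemma bT2 (R : comRingType) (f ft : sc R) (i : 'I_3) (y : dbl R) k :
  (dbr f ft (zr, eb i) y).2 0 k = (y.2 0 o0 * ft i o0 k + y.2 0 o1 * ft i o1 k + y.2 0 o2 * ft i o2 k)
                            - (y.1 0 o0 * f k o0 i + y.1 0 o1 * f k o1 i + y.1 0 o2 * f k o2 i).
Proof. by rewrite dbrT3' mxE. Qed.

Lemma comp1 (R : ringType) (x : dbl R) k : x = (0, 0) -> x.1 0 k = 0.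
Proof. by move=> ->; rewrite mxE. Qed.
Lemma comp2 (R : ringType) (x : dbl R) k : x = (0, 0) -> x.2 0 k = 0.
Proof. by move=> ->; rewrite mxE. Qed.

Definition c1 (R : ringType) (x : dbl R) (k : 'I_3) := x.1 0 k.
Definition c2 (R : ringType) (x : dbl R) (k : 'I_3) := x.2 0 k.
Lemma c1J (R : ringType) (x : dbl R) k : x = (0, 0) -> c1 x k = 0.
Proof. by move=> ->; rewrite /c1 mxE. Qed.
Lemma c2J (R : ringType) (x : dbl R) k : x = (0, 0) -> c2 x k = 0.
Proof. by move=> ->; rewrite /c2 mxE. Qed.
Lemma c1D (R : ringType) (x y : dbl R) k : c1 (dadd x y) k = c1 x k + c1 y k.
Proof. exact: dadd1. Qed.
Lemma c2D (R : ringType) (x y : dbl R) k : c2 (dadd x y) k = c2 x k + c2 y k.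
Proof. exact: dadd2. Qed.
Lemma c1X (R : ringType) i k : c1 ((eb i, zr) : dbl R) k = (i == k)%:R.
Proof. by rewrite /c1 ebE. Qed.
Lemma c2X (R : ringType) i k : c2 ((eb i, zr) : dbl R) k = 0.
Proof. by rewrite /c2 zrE. Qed.
Lemma c1T (R : ringType) i k : c1 ((zr, eb i) : dbl R) k = 0.
Proof. by rewrite /c1 zrE. Qed.
Lemma c2T (R : ringType) i k : c2 ((zr, eb i) : dbl R) k = (i == k)%:R.
Proof. by rewrite /c2 ebE. Qed.

Lemma cX1 (R : comRingType) (f ft : sc R) (i : 'I_3) (y : dbl R) k :
  c1 (dbr f ft (eb i, zr) y) k = c1 y o0 * f i o0 k + c1 y o1 * f i o1 k + c1 y o2 * f i o2 k
                           + (c2 y o0 * ft o0 k i + c2 y o1 * ft o1 k i + c2 y o2 * ft o2 k i).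
Proof. exact: bX1. Qed.
Lemma cX2 (R : comRingType) (f ft : sc R) (i : 'I_3) (y : dbl R) k :
  c2 (dbr f ft (eb i, zr) y) k = c2 y o0 * f k i o0 + c2 y o1 * f k i o1 + c2 y o2 * f k i o2.
Proof. exact: bX2. Qed.
Lemma cT1 (R : comRingType) (f ft : sc R) (i : 'I_3) (y : dbl R) k :
  c1 (dbr f ft (zr, eb i) y) k = - (c1 y o0 * ft i k o0 + c1 y o1 * ft i k o1 + c1 y o2 * ft i k o2).
Proof. exact: bT1. Qed.
Lemma cT2 (R : comRingType) (f ft : sc R) (i : 'I_3) (y : dbl R) k :
  c2 (dbr f ft (zr, eb i) y) k = (c2 y o0 * ft i o0 k + c2 y o1 * ft i o1 k + c2 y o2 * ft i o2 k)
                            - (c1 y o0 * f k o0 i + c1 y o1 * f k o1 i + c1 y o2 * f k o2 i).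
Proof. exact: bT2. Qed.

Lemma sum33 (R : nmodType) (F : 'I_3 -> 'I_3 -> R) : \sum_p \sum_q F p q =
  F o0 o0 + F o0 o1 + F o0 o2 + (F o1 o0 + F o1 o1 + F o1 o2) + (F o2 o0 + F o2 o1 + F o2 o2).
Proof. by under eq_bigr do rewrite sum3; rewrite sum3. Qed.
Lemma comb4 (R : comRingType) (x1 x2 x3 x4 y : R) c1 c2 c3 c4 :
  x1 = 0 -> x2 = 0 -> x3 = 0 -> x4 = 0 -> y = c1 * x1 + c2 * x2 + c3 * x3 + c4 * x4 -> y = 0.
Proof. by move=> -> -> -> -> ->; rewrite !mulr0 !addr0. Qed.

Lemma eq0E (F : comRingType) (x y : F) : x = y -> x - y = 0.
Proof. by move=> ->; rewrite subrr. Qed.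

Lemma mul_eq0l (F : fieldType) (c x : F) : c != 0 -> c * x = 0 -> x = 0.
Proof. by move=> c0 /eqP; rewrite mulf_eq0 (negbTE c0) => /eqP. Qed.


Lemma id3E (R : comUnitRingType) (M : 'M[R]_3) (i j : 'I_3) : M \in unitmx ->
  M i o0 * invmx M o0 j + M i o1 * invmx M o1 j + M i o2 * invmx M o2 j = (i == j)%:R.
Proof. by move=> uM; rewrite -mul3E mulmxV // mxE. Qed.

Lemma contr_a (R : comUnitRingType) (M : 'M[R]_3) (f : sc R) i j k : M \in unitmx ->
  chg M f i j o0 * M k o0 + chg M f i j o1 * M k o1 + chg M f i j o2 * M k o2 =
  \sum_p \sum_q M p i * M q j * f p q k.
Proof.
move=> uM.
transitivity (\sum_p \sum_q \sum_r M p i * M q j * f p q r *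
   (M k o0 * invmx M o0 r + M k o1 * invmx M o1 r + M k o2 * invmx M o2 r)).
  by rewrite !chgE !chgTE !sum3; ring.
under eq_bigr do under eq_bigr do under eq_bigr do rewrite id3E //.
apply: eq_bigr => p _; apply: eq_bigr => q _.
by rewrite sum3; elim/ord3P: k => /=; ring.
Qed.

Lemma contr_b (R : comUnitRingType) (M : 'M[R]_3) (f : sc R) i j k : M \in unitmx ->
  chg M f i o0 j * invmx M o0 k + chg M f i o1 j * invmx M o1 k + chg M f i o2 j * invmx M o2 k =
  \sum_p \sum_r M p i * f p k r * invmx M j r.
Proof.
move=> uM.
transitivity (\sum_p \sum_q (\sum_r M p i * f p q r * invmx M j r) *
   (M q o0 * invmx M o0 k + M q o1 * invmx M o1 k + M q o2 * invmx M o2 k)).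
  by rewrite !chgE !chgTE !sum3; ring.
under eq_bigr do under eq_bigr do rewrite id3E //.
apply: eq_bigr => p _.
by rewrite sum3; elim/ord3P: k => /=; ring.
Qed.

Lemma contr_c (R : comUnitRingType) (M : 'M[R]_3) (f : sc R) i j k : M \in unitmx ->
  chg M f o0 i j * invmx M o0 k + chg M f o1 i j * invmx M o1 k + chg M f o2 i j * invmx M o2 k =
  \sum_q \sum_r M q i * f k q r * invmx M j r.
Proof.
move=> uM.
transitivity (\sum_p (\sum_q \sum_r M q i * f p q r * invmx M j r) *
   (M p o0 * invmx M o0 k + M p o1 * invmx M o1 k + M p o2 * invmx M o2 k)).
  by rewrite !chgE !chgTE !sum3; ring.
under eq_bigr do rewrite id3E //.
by rewrite sum3; elim/ord3P: k => /=; ring.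
Qed.

Lemma chi_chg (R : comUnitRingType) (M : 'M[R]_3) (g : sc R) i : M \in unitmx ->
  chg M g i o0 o0 + chg M g i o1 o1 + chg M g i o2 o2 =
  M o0 i * (g o0 o0 o0 + g o0 o1 o1 + g o0 o2 o2) +
  M o1 i * (g o1 o0 o0 + g o1 o1 o1 + g o1 o2 o2) +
  M o2 i * (g o2 o0 o0 + g o2 o1 o1 + g o2 o2 o2).
Proof.
move=> uM.
transitivity (\sum_p \sum_q \sum_r M p i * g p q r *
   (M q o0 * invmx M o0 r + M q o1 * invmx M o1 r + M q o2 * invmx M o2 r)).
  by rewrite !chgE !chgTE !sum3; ring.
under eq_bigr do under eq_bigr do under eq_bigr do rewrite id3E //.
by rewrite !sum3 /=; ring.
Qed.

Lemma chg_id (R : comUnitRingType) (f : sc R) i j k : chg 1%:M f i j k = f i j k.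
Proof.
rewrite chgE invmx1 chgTE !mxE.
by elim/ord3P: i; elim/ord3P: j; elim/ord3P: k => /=; ring.
Qed.

Lemma chg_ext (R : comUnitRingType) (M : 'M[R]_3) (f g : sc R) :
  sc_eq f g -> sc_eq (chg M f) (chg M g).
Proof. by move=> H i j k; rewrite !chgE !chgTE !H. Qed.

Section Hom.
Variables (R : comUnitRingType) (A : 'M[R]_3) (f ft : sc R).
Hypothesis uA : A \in unitmx.
Let Bt := (invmx A)^T.

Lemma uBt : Bt \in unitmx.
Proof. by rewrite /Bt unitmx_tr unitmx_inv. Qed.

Lemma iBt : invmx Bt = A^T.
Proof. by rewrite /Bt trmx_inv invmxK. Qed.

Lemma KA i j k : chg A f i j o0 * A k o0 + chg A f i j o1 * A k o1 + chg A f i j o2 * A k o2 =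
  \sum_p \sum_q A p i * A q j * f p q k.
Proof. exact: contr_a. Qed.

Lemma KB j i k : chg Bt ft j o0 i * A k o0 + chg Bt ft j o1 i * A k o1 + chg Bt ft j o2 i * A k o2 =
  \sum_p \sum_r invmx A j p * ft p k r * A r i.
Proof.
have := contr_b ft j i k uBt; rewrite iBt !mxE => ->.
by apply: eq_bigr => p _; apply: eq_bigr => r _; rewrite !mxE.
Qed.

Lemma KC i j k : chg Bt ft i j o0 * invmx A o0 k + chg Bt ft i j o1 * invmx A o1 k
   + chg Bt ft i j o2 * invmx A o2 k =
  \sum_p \sum_q invmx A i p * invmx A j q * ft p q k.
Proof.
have := contr_a ft i j k uBt; rewrite /Bt !mxE => ->.
by apply: eq_bigr => p _; apply: eq_bigr => r _; rewrite !mxE.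
Qed.

Lemma KD i j k : chg A f o0 i j * invmx A o0 k + chg A f o1 i j * invmx A o1 k
   + chg A f o2 i j * invmx A o2 k =
  \sum_q \sum_r A q i * f k q r * invmx A j r.
Proof. exact: contr_c. Qed.

Lemma dbr_hom (x y : dbl R) :
  dbr f ft (x.1 *m A^T, x.2 *m invmx A) (y.1 *m A^T, y.2 *m invmx A) =
  ((dbr (chg A f) (chg Bt ft) x y).1 *m A^T, (dbr (chg A f) (chg Bt ft) x y).2 *m invmx A).
Proof.
congr pair; apply/rowP => k.
- transitivity ((x.1 0 o0 * y.1 0 o0 * (chg A f o0 o0 o0 * A k o0 + chg A f o0 o0 o1 * A k o1 + chg A f o0 o0 o2 * A k o2) + x.1 0 o0 * y.1 0 o1 * (chg A f o0 o1 o0 * A k o0 + chg A f o0 o1 o1 * A k o1 + chg A f o0 o1 o2 * A k o2) + x.1 0 o0 * y.1 0 o2 * (chg A f o0 o2 o0 * A k o0 + chg A f o0 o2 o1 * A k o1 + chg A f o0 o2 o2 * A k o2) + x.1 0 o1 * y.1 0 o0 * (chg A f o1 o0 o0 * A k o0 + chg A f o1 o0 o1 * A k o1 + chg A f o1 o0 o2 * A k o2) + x.1 0 o1 * y.1 0 o1 * (chg A f o1 o1 o0 * A k o0 + chg A f o1 o1 o1 * A k o1 + chg A f o1 o1 o2 * A k o2) + x.1 0 o1 * y.1 0 o2 * (chg A f o1 o2 o0 * A k o0 + chg A f o1 o2 o1 * A k o1 + chg A f o1 o2 o2 * A k o2) + x.1 0 o2 * y.1 0 o0 * (chg A f o2 o0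 o0 * A k o0 + chg A f o2 o0 o1 * A k o1 + chg A f o2 o0 o2 * A k o2) + x.1 0 o2 * y.1 0 o1 * (chg A f o2 o1 o0 * A k o0 + chg A f o2 o1 o1 * A k o1 + chg A f o2 o1 o2 * A k o2) + x.1 0 o2 * y.1 0 o2 * (chg A f o2 o2 o0 * A k o0 + chg A f o2 o2 o1 * A k o1 + chg A f o2 o2 o2 * A k o2))
 + (x.1 0 o0 * y.2 0 o0 * (chg Bt ft o0 o0 o0 * A k o0 + chg Bt ft o0 o1 o0 * A k o1 + chg Bt ft o0 o2 o0 * A k o2) + x.1 0 o0 * y.2 0 o1 * (chg Bt ft o1 o0 o0 * A k o0 + chg Bt ft o1 o1 o0 * A k o1 + chg Bt ft o1 o2 o0 * A k o2) + x.1 0 o0 * y.2 0 o2 * (chg Bt ft o2 o0 o0 * A k o0 + chg Bt ft o2 o1 o0 * A k o1 + chg Bt ft o2 o2 o0 * A k o2) + x.1 0 o1 * y.2 0 o0 * (chg Bt ft o0 o0 o1 * A k o0 + chg Bt ft o0 o1 o1 * A k o1 + chg Bt ft o0 o2 o1 * A k o2) + x.1 0 o1 * y.2 0 o1 * (chg Bt ft o1 o0 o1 * A k o0 + chg Bt ft o1 o1 o1 * A k o1 + chg Bt ft o1 o2 o1 * A k o2) + x.1 0 o1 * y.2 0 o2 * (chg Bt ft o2 o0 o1 * A k o0 + chg Bt ft o2 o1 o1 * A k o1 + chg Bt ft o2 o2 o1 * A k o2) + x.1 0 o2 * y.2 0 o0 * (chg Bt ft o0 o0 o2 * A k o0 +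 chg Bt ft o0 o1 o2 * A k o1 + chg Bt ft o0 o2 o2 * A k o2) + x.1 0 o2 * y.2 0 o1 * (chg Bt ft o1 o0 o2 * A k o0 + chg Bt ft o1 o1 o2 * A k o1 + chg Bt ft o1 o2 o2 * A k o2) + x.1 0 o2 * y.2 0 o2 * (chg Bt ft o2 o0 o2 * A k o0 + chg Bt ft o2 o1 o2 * A k o1 + chg Bt ft o2 o2 o2 * A k o2))
 - (x.2 0 o0 * y.1 0 o0 * (chg Bt ft o0 o0 o0 * A k o0 + chg Bt ft o0 o1 o0 * A k o1 + chg Bt ft o0 o2 o0 * A k o2) + x.2 0 o1 * y.1 0 o0 * (chg Bt ft o1 o0 o0 * A k o0 + chg Bt ft o1 o1 o0 * A k o1 + chg Bt ft o1 o2 o0 * A k o2) + x.2 0 o2 * y.1 0 o0 * (chg Bt ft o2 o0 o0 * A k o0 + chg Bt ft o2 o1 o0 * A k o1 + chg Bt ft o2 o2 o0 * A k o2) + x.2 0 o0 * y.1 0 o1 * (chg Bt ft o0 o0 o1 * A k o0 + chg Bt ft o0 o1 o1 * A k o1 + chg Bt ft o0 o2 o1 * A k o2) + x.2 0 o1 * y.1 0 o1 * (chg Bt ft o1 o0 o1 * A k o0 + chg Bt ft o1 o1 o1 * A k o1 + chg Bt ft o1 o2 o1 * A k o2) + x.2 0 o2 * y.1 0 o1 * (chg Bt ft o2 o0 o1 * A k o0 + chg Bt ft o2 o1 o1 * A k o1 + chg Bt ft o2 o2 o1 * A k o2) + x.2 0 o0 * y.1 0 o2 * (chg Bt ft o0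 o0 o2 * A k o0 + chg Bt ft o0 o1 o2 * A k o1 + chg Bt ft o0 o2 o2 * A k o2) + x.2 0 o1 * y.1 0 o2 * (chg Bt ft o1 o0 o2 * A k o0 + chg Bt ft o1 o1 o2 * A k o1 + chg Bt ft o1 o2 o2 * A k o2) + x.2 0 o2 * y.1 0 o2 * (chg Bt ft o2 o0 o2 * A k o0 + chg Bt ft o2 o1 o2 * A k o1 + chg Bt ft o2 o2 o2 * A k o2))).
    rewrite !KA !KB !sum3 dbr1E; cbn [fst snd]; rewrite !mul3E !mxE; ring.
  rewrite [RHS]mul3E !dbr1E !mxE; ring.
- transitivity ((x.2 0 o0 * y.2 0 o0 * (chg Bt ft o0 o0 o0 * invmx A o0 k + chg Bt ft o0 o0 o1 * invmx A o1 k + chg Bt ft o0 o0 o2 * invmx A o2 k) + x.2 0 o0 * y.2 0 o1 * (chg Bt ft o0 o1 o0 * invmx A o0 k + chg Bt ft o0 o1 o1 * invmx A o1 k + chg Bt ft o0 o1 o2 * invmx A o2 k) + x.2 0 o0 * y.2 0 o2 * (chg Bt ft o0 o2 o0 * invmx A o0 k + chg Bt ft o0 o2 o1 * invmx A o1 k + chg Bt ft o0 o2 o2 * invmx A o2 k) + x.2 0 o1 * y.2 0 o0 * (chg Bt ft o1 o0 o0 * invmx A o0 k + chg Bt ft o1 o0 o1 * invmx A o1 k + chg Bt ft o1 o0 o2 * invmx A o2 k) + x.2 0 o1 * y.2 0 o1 * (chg Bt ft o1 o1 o0 * invmx A o0 k + chg Bt ft o1 o1 o1 * invmx A o1 k +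 chg Bt ft o1 o1 o2 * invmx A o2 k) + x.2 0 o1 * y.2 0 o2 * (chg Bt ft o1 o2 o0 * invmx A o0 k + chg Bt ft o1 o2 o1 * invmx A o1 k + chg Bt ft o1 o2 o2 * invmx A o2 k) + x.2 0 o2 * y.2 0 o0 * (chg Bt ft o2 o0 o0 * invmx A o0 k + chg Bt ft o2 o0 o1 * invmx A o1 k + chg Bt ft o2 o0 o2 * invmx A o2 k) + x.2 0 o2 * y.2 0 o1 * (chg Bt ft o2 o1 o0 * invmx A o0 k + chg Bt ft o2 o1 o1 * invmx A o1 k + chg Bt ft o2 o1 o2 * invmx A o2 k) + x.2 0 o2 * y.2 0 o2 * (chg Bt ft o2 o2 o0 * invmx A o0 k + chg Bt ft o2 o2 o1 * invmx A o1 k + chg Bt ft o2 o2 o2 * invmx A o2 k))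
 + (x.1 0 o0 * y.2 0 o0 * (chg A f o0 o0 o0 * invmx A o0 k + chg A f o1 o0 o0 * invmx A o1 k + chg A f o2 o0 o0 * invmx A o2 k) + x.1 0 o0 * y.2 0 o1 * (chg A f o0 o0 o1 * invmx A o0 k + chg A f o1 o0 o1 * invmx A o1 k + chg A f o2 o0 o1 * invmx A o2 k) + x.1 0 o0 * y.2 0 o2 * (chg A f o0 o0 o2 * invmx A o0 k + chg A f o1 o0 o2 * invmx A o1 k + chg A f o2 o0 o2 * invmx A o2 k) + x.1 0 o1 * y.2 0 o0 * (chg A f o0 o1 o0 * invmx A o0 k + chg A f o1 o1 o0 * invmx A o1 k + chg A f o2 o1 o0 * invmx A o2 k) + x.1 0 o1 * y.2 0 o1 * (chg A f o0 o1 o1 * invmx A o0 k + chg A f o1 o1 o1 * invmx A o1 k + chg A f o2 o1 o1 * invmx A o2 k) + x.1 0 o1 * y.2 0 o2 * (chg A f o0 o1 o2 * invmx A o0 k + chg A f o1 o1 o2 * invmx A o1 k + chg A f o2 o1 o2 * invmx A o2 k) + x.1 0 o2 * y.2 0 o0 * (chg A f o0 o2 o0 * invmx A o0 k + chg A f o1 o2 o0 * invmx A o1 k + chg A f o2 o2 o0 * invmx A o2 k) + x.1 0 o2 * y.2 0 o1 * (chg A f o0 o2 o1 * invmx A o0 k + chg A f o1 o2 o1 * invmx A o1 k + chg A f o2 o2 o1 * invmx A o2 k) + x.1 0 o2 * y.2 0 o2 * (chg A f o0 o2 o2 * invmx A o0 k + chg A f o1 o2 o2 * invmx A o1 k + chg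 A f o2 o2 o2 * invmx A o2 k))
 - (x.2 0 o0 * y.1 0 o0 * (chg A f o0 o0 o0 * invmx A o0 k + chg A f o1 o0 o0 * invmx A o1 k + chg A f o2 o0 o0 * invmx A o2 k) + x.2 0 o1 * y.1 0 o0 * (chg A f o0 o0 o1 * invmx A o0 k + chg A f o1 o0 o1 * invmx A o1 k + chg A f o2 o0 o1 * invmx A o2 k) + x.2 0 o2 * y.1 0 o0 * (chg A f o0 o0 o2 * invmx A o0 k + chg A f o1 o0 o2 * invmx A o1 k + chg A f o2 o0 o2 * invmx A o2 k) + x.2 0 o0 * y.1 0 o1 * (chg A f o0 o1 o0 * invmx A o0 k + chg A f o1 o1 o0 * invmx A o1 k + chg A f o2 o1 o0 * invmx A o2 k) + x.2 0 o1 * y.1 0 o1 * (chg A f o0 o1 o1 * invmx A o0 k + chg A f o1 o1 o1 * invmx A o1 k + chg A f o2 o1 o1 * invmx A o2 k) + x.2 0 o2 * y.1 0 o1 * (chg A f o0 o1 o2 * invmx A o0 k + chg A f o1 o1 o2 * invmx A o1 k + chg A f o2 o1 o2 * invmx A o2 k) + x.2 0 o0 * y.1 0 o2 * (chg A f o0 o2 o0 * invmx A o0 k + chg A f o1 o2 o0 * invmx A o1 k + chg A f o2 o2 o0 * invmx A o2 k) + x.2 0 o1 * y.1 0 o2 * (chg A f o0 o2 o1 * invmx A o0 k + chg A f o1 o2 o1 * invmx A o1 k + chg A f o2 o2 o1 * invmx A o2 k) + x.2 0 o2 * y.1 0 o2 * (chg A f o0 o2 o2 * invmx A o0 k + chg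 A f o1 o2 o2 * invmx A o1 k + chg A f o2 o2 o2 * invmx A o2 k))).
    rewrite !KC !KD !sum3 dbr2E; cbn [fst snd]; rewrite !mul3E !mxE; ring.
  rewrite [RHS]mul3E !dbr2E; ring.
Qed.
End Hom.

Definition Phi (R : comUnitRingType) (A : 'M[R]_3) (x : dbl R) : dbl R :=
  (x.1 *m A^T, x.2 *m invmx A).

Lemma Phi_add (R : comUnitRingType) (A : 'M[R]_3) (x y : dbl R) :
  Phi A (dadd x y) = dadd (Phi A x) (Phi A y).
Proof. by rewrite /Phi /dadd /= !mulmxDl. Qed.

Lemma Phi_inj0 (R : comUnitRingType) (A : 'M[R]_3) (x : dbl R) : A \in unitmx ->
  Phi A x = (0, 0) -> x = (0, 0).
Proof.
move=> uA; case: x => u v [] Hu Hv.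
have uAt : A^T \in unitmx by rewrite unitmx_tr.
have uAi : invmx A \in unitmx by rewrite unitmx_inv.
congr pair.
- by rewrite -[u](mulmxK uAt) Hu mul0mx.
- by rewrite -[v](mulmxK uAi) Hv mul0mx.
Qed.

Lemma manin_transfer (R : comUnitRingType) (A : 'M[R]_3) (f ft : sc R) :
  A \in unitmx -> is_manin f ft -> is_manin (chg A f) (chg (invmx A)^T ft).
Proof.
move=> uA [H0 HJ]; have hom := dbr_hom f ft uA.
have homP : forall x y, Phi A (dbr (chg A f) (chg (invmx A)^T ft) x y) = dbr f ft (Phi A x) (Phi A y).
  by move=> x y; rewrite /Phi hom.
split.
- move=> x; apply: (Phi_inj0 uA); by rewrite homP H0.
- move=> x y z; apply: (Phi_inj0 uA); by rewrite !Phi_add !homP HJ.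
Qed.


Definition VIc (R : comRingType) (a : R) : sc R :=
  mk_sc (vec3 0 (- a) (-1)) (vec3 0 0 0) (vec3 0 1 a).
Lemma VIcE (R : realType) (a : R) : bianchiVIa a = VIc a.
Proof. by []. Qed.

Ltac jstep F G :=
  rewrite ?(cX1 F G o0) ?(cX1 F G o1) ?(cX1 F G o2) ?(cX2 F G o0) ?(cX2 F G o1) ?(cX2 F G o2)
          ?(cT1 F G o0) ?(cT1 F G o1) ?(cT1 F G o2) ?(cT2 F G o0) ?(cT2 F G o1) ?(cT2 F G o2);
  rewrite ?(c1X _ o0) ?(c1X _ o1) ?(c1X _ o2) ?(c2X _ o0) ?(c2X _ o1) ?(c2X _ o2)
          ?(c1T _ o0) ?(c1T _ o1) ?(c1T _ o2) ?(c2T _ o0) ?(c2T _ o1) ?(c2T _ o2).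
Ltac jall F G gE := rewrite ?c1D ?c2D; jstep F G; jstep F G; rewrite !gE /G9 /VIc /mk_sc /vec3 /=.

Section VIeqs.
Local Opaque eb zr dbr c1 c2.
Lemma VI_eqs (R : comRingType) (a : R) (g : sc R) : is_manin (VIc a) g ->
  forall A0 A1 A2 B0 B1 B2 C0 C1 C2 : R, sc_eq g (G9 A0 A1 A2 B0 B1 B2 C0 C1 C2) ->
  [/\ C1 = - A2, C2 = - A1, (A2 - a * A1) * 2 = 0 & B2 = a * B1 - A0 - a * C0] /\
  ((1 - a^+2) * B1 + 2 * a * A0 + (1 + a^+2) * C0 = 0 /\
      A0 * B1 - C0 * B2 + (C2 - A1) * B0 = 0).
Proof.
case=> H0 HJ A0 A1 A2 B0 B1 B2 C0 C1 C2 gE.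
have E2 := HJ (eb o0, zr) (eb o1, zr) (zr, eb o0); move/(c1J o1): E2; jall (VIc a) g gE => E2.
have E3 := HJ (eb o0, zr) (eb o1, zr) (zr, eb o0); move/(c1J o2): E3; jall (VIc a) g gE => E3.
have E24 := HJ (eb o1, zr) (eb o2, zr) (zr, eb o1); move/(c1J o2): E24; jall (VIc a) g gE => E24.
have E6 := HJ (eb o0, zr) (eb o1, zr) (zr, eb o1); move/(c1J o2): E6; jall (VIc a) g gE => E6.
have E15 := HJ (eb o0, zr) (eb o2, zr) (zr, eb o1); move/(c1J o2): E15; jall (VIc a) g gE => E15.
have EJ := HJ (zr, eb o0) (zr, eb o1) (zr, eb o2); move/(c2J o0): EJ; jall (VIc a) g gE => EJ.
split; first split.
- by apply: eq_sub0; apply: (comb1 (c1:=1) E2); ring.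
- by apply: eq_sub0; apply: (comb1 (c1:=-1) E3); ring.
- by apply: (comb3 (c1:=-1) (c2:=1) (c3:=a) E24 E2 E3); ring.
- by apply: eq_sub0; apply: (comb1 (c1:=1) E6); ring.
split.
- by apply: (comb2 (c1:=1) (c2:=a) E15 E6); ring.
- by apply: (comb1 (c1:=1) EJ); ring.
Qed.
End VIeqs.


Ltac fs := field; do ?[apply/andP; split]; by [assumption|].

Section Classif.
Variables (F : fieldType) (a : F).
Hypotheses (a0 : a != 0) (am1 : a - 1 != 0) (ap1 : a + 1 != 0) (two0 : (2 : F) != 0).

Definition amx (x y l m : F) (i j : 'I_3) : F :=
  match val i, val j with
  | O, O => 1 | O, _ => 0
  | S O, O => x + y | S O, S O => (l + m) / 2 | S O, _ => (l - m) / 2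
  | _, O => x - y | _, S O => (l - m) / 2 | _, _ => (l + m) / 2
  end.

Definition autm (x y l m : F) : 'M[F]_3 := \matrix_(i, j) amx x y l m i j.

Lemma autm_inv (x y l m : F) : l != 0 -> m != 0 ->
  autm x y l m *m autm (- x / l) (- y / m) l^-1 m^-1 = 1%:M.
Proof.
move=> l0 m0; apply/matrixP => i j; rewrite mul3E !mxE.
elim/ord3P: i; elim/ord3P: j; rewrite /amx /=; fs.
Qed.

Lemma autm_unit (x y l m : F) : l != 0 -> m != 0 -> autm x y l m \in unitmx.
Proof. by move=> l0 m0; case: (mulmx1_unit (autm_inv x y l0 m0)). Qed.

Lemma autm_invE (x y l m : F) : l != 0 -> m != 0 ->
  invmx (autm x y l m) = autm (- x / l) (- y / m) l^-1 m^-1.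
Proof. by move=> l0 m0; apply: inv_uniq; apply: autm_inv. Qed.

Lemma autm_VI (x y l m : F) : l != 0 -> m != 0 -> sc_eq (chg (autm x y l m) (VIc a)) (VIc a).
Proof.
move=> l0 m0 i j k; rewrite chgE autm_invE // chgTE !mxE.
by elim/ord3P: i; elim/ord3P: j; elim/ord3P: k; rewrite /amx /VIc /mk_sc /vec3 /=; fs.
Qed.

Definition B1f (A0 C0 : F) := (2 * a * A0 + (1 + a ^+ 2) * C0) / (a ^+ 2 - 1).
Definition Pg (A0 A1 B0 C0 : F) : sc F :=
  G9 A0 A1 (a * A1) B0 (B1f A0 C0) (a * B1f A0 C0 - A0 - a * C0) C0 (- (a * A1)) (- A1).

Definition tau := (a - 1) / (a + 1).
Definition sig := (a + 1) / (a - 1).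
Definition c1n (A0 A1 B0 C0 x y l m : F) := ((A0 - C0) / 2 + x * ((a + 1) * A1)) / l.
Definition c2n (A0 A1 B0 C0 x y l m : F) := ((A0 + C0) / 2 - tau * ((a + 1) * A1) * y) / m.
Definition c3n (A0 A1 B0 C0 x y l m : F) :=
  (((A0 - C0) / 2 + x * ((a + 1) * A1)) * y - ((A0 + C0) / 2 - tau * ((a + 1) * A1) * y) * x
   - B0 / 2 - sig * ((A0 + C0) / 2) * x + tau * ((A0 - C0) / 2) * y) / (l * m).

Lemma am2 : a ^+ 2 - 1 != 0.
Proof.
have -> : a ^+ 2 - 1 = (a - 1) * (a + 1) by ring.
by rewrite mulf_neq0.
Qed.

Lemma autm_P (A0 A1 B0 C0 x y l m : F) : l != 0 -> m != 0 ->
  sc_eq (chg (invmx (autm x y l m))^T (Pg A0 A1 B0 C0))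
        (Pg (c1n A0 A1 B0 C0 x y l m + c2n A0 A1 B0 C0 x y l m) A1
            (- 2 * c3n A0 A1 B0 C0 x y l m) (c2n A0 A1 B0 C0 x y l m - c1n A0 A1 B0 C0 x y l m)).
Proof.
move=> l0 m0 i j k; have a2 := am2.
rewrite chgE -trmx_inv invmxK autm_invE // chgTE !mxE.
rewrite /c1n /c2n /c3n /tau /sig.
by elim/ord3P: i; elim/ord3P: j; elim/ord3P: k;
  rewrite /amx /Pg /B1f /G9 /mk_sc /vec3 /=; fs.
Qed.

Definition dI : sc F := mk_sc (vec3 0 0 0) (vec3 0 0 0) (vec3 0 0 0).
Definition dII : sc F := mk_sc (vec3 0 0 0) (vec3 1 0 0) (vec3 0 0 0).
Definition dVIi (b : F) : sc F :=
  mk_sc (vec3 0 (- (b / a)) (- b)) (vec3 0 0 0) (vec3 0 b (b / a)).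
Definition dVIii : sc F :=
  mk_sc (vec3 1 0 0) (vec3 0 ((a + 1) / (a - 1)) ((a + 1) / (a - 1))) (vec3 1 0 0).
Definition dVIiii : sc F :=
  mk_sc (vec3 1 0 0) (vec3 0 (- ((a - 1) / (a + 1))) ((a - 1) / (a + 1))) (vec3 (-1) 0 0).
Definition inlist (ft : sc F) : Prop :=
  sc_eq ft dI \/ sc_eq ft dII \/ (exists b : F, b != 0 /\ sc_eq ft (dVIi b)) \/
  sc_eq ft dVIii \/ sc_eq ft dVIiii.


Lemma P0 : sc_eq (Pg 0 0 0 0) dI. Proof. rewrite /dI; move=> i j k; have a2 := am2;
  elim/ord3P: i; elim/ord3P: j; elim/ord3P: k; rewrite /Pg /B1f /G9 /mk_sc /vec3 /=; fs. Qed.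
Lemma P1 : sc_eq (Pg 0 0 1 0) dII. Proof. rewrite /dII; move=> i j k; have a2 := am2;
  elim/ord3P: i; elim/ord3P: j; elim/ord3P: k; rewrite /Pg /B1f /G9 /mk_sc /vec3 /=; fs. Qed.
Lemma P2 A1 : sc_eq (Pg 0 A1 0 0) (dVIi (- (a * A1))). Proof. rewrite /dVIi; move=> i j k; have a2 := am2;
  elim/ord3P: i; elim/ord3P: j; elim/ord3P: k; rewrite /Pg /B1f /G9 /mk_sc /vec3 /=; fs. Qed.
Lemma P3 : sc_eq (Pg 1 0 0 1) dVIii. Proof. rewrite /dVIii; move=> i j k; have a2 := am2;
  elim/ord3P: i; elim/ord3P: j; elim/ord3P: k; rewrite /Pg /B1f /G9 /mk_sc /vec3 /=; fs. Qed.
Lemma P4 : sc_eq (Pg 1 0 0 (-1)) dVIiii. Proof. rewrite /dVIiii; move=> i j k; have a2 := am2;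
  elim/ord3P: i; elim/ord3P: j; elim/ord3P: k; rewrite /Pg /B1f /G9 /mk_sc /vec3 /=; fs. Qed.

Lemma sc_trans (f g h : sc F) : sc_eq f g -> sc_eq g h -> sc_eq f h.
Proof. by move=> H1 H2 i j k; rewrite H1 H2. Qed.

Lemma classify_step (A0 A1 B0 C0 x y l m A0' B0' C0' : F) (T : sc F) : l != 0 -> m != 0 ->
  c1n A0 A1 B0 C0 x y l m + c2n A0 A1 B0 C0 x y l m = A0' ->
  - 2 * c3n A0 A1 B0 C0 x y l m = B0' ->
  c2n A0 A1 B0 C0 x y l m - c1n A0 A1 B0 C0 x y l m = C0' ->
  sc_eq (Pg A0' A1 B0' C0') T ->
  exists M, [/\ M \in unitmx, sc_eq (chg M (VIc a)) (VIc a) &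
                sc_eq (chg (invmx M)^T (Pg A0 A1 B0 C0)) T].
Proof.
move=> l0 m0 e1 e2 e3 HT; exists (autm x y l m); split.
- exact: autm_unit.
- exact: autm_VI.
- by apply: sc_trans (@autm_P A0 A1 B0 C0 x y l m l0 m0) _; rewrite e1 e2 e3.
Qed.

Lemma classify (A0 A1 B0 C0 : F) : a * (A0 ^+ 2 - C0 ^+ 2) = (a ^+ 2 - 1) * A1 * B0 ->
  exists M, exists T, [/\ M \in unitmx, sc_eq (chg M (VIc a)) (VIc a),
                sc_eq (chg (invmx M)^T (Pg A0 A1 B0 C0)) T & inlist T].
Proof.
move=> J; have a2 := am2.
have tau0 : tau != 0 by rewrite /tau mulf_neq0 // invr_neq0.
have o0' : (1 : F) != 0 := oner_neq0 F.
have [A10|A10] := eqVneq A1 0; last first.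
  have p0 : (a + 1) * A1 != 0 by rewrite mulf_neq0.
  have B0E : B0 = a * (A0 ^+ 2 - C0 ^+ 2) / ((a ^+ 2 - 1) * A1).
    by rewrite J; field; rewrite A10 a2.
  set x := - ((A0 - C0) / 2) / ((a + 1) * A1).
  set y := ((A0 + C0) / 2) / (tau * ((a + 1) * A1)).
  have e1 : c1n A0 A1 B0 C0 x y 1 1 + c2n A0 A1 B0 C0 x y 1 1 = 0.
    by rewrite /c1n /c2n /x /y; fs.
  have e2 : - 2 * c3n A0 A1 B0 C0 x y 1 1 = 0.
    by rewrite /c3n B0E /x /y /tau /sig; fs.
  have e3 : c2n A0 A1 B0 C0 x y 1 1 - c1n A0 A1 B0 C0 x y 1 1 = 0.
    by rewrite /c1n /c2n /x /y; fs.
  have [M [uM HM HT]] := classify_step o0' o0' e1 e2 e3 (P2 A1).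
  exists M, (dVIi (- (a * A1))); split => //; right; right; left.
  by exists (- (a * A1)); split => //; rewrite oppr_eq0 mulf_neq0.
subst A1.
have J' : (A0 - C0) * (A0 + C0) = 0.
  by apply: (mul_eq0l a0); rewrite mulr0 mul0r in J; rewrite -J; ring.
have [S0|S0] := eqVneq (A0 + C0) 0; last first.
  have C0E : C0 = A0.
    by apply/eqP; rewrite eq_sym -subr_eq0; apply/eqP; move/eqP: J'; rewrite mulf_eq0 (negbTE S0) orbF => /eqP.
  subst C0.
  have c20 : (A0 + A0) / 2 != 0 by rewrite mulf_neq0 // invr_neq0.
  set x := - (B0 / 2) * (a - 1) / (2 * a * ((A0 + A0) / 2)).
  have e1 : c1n A0 0 B0 A0 x 0 1 ((A0 + A0) / 2) + c2n A0 0 B0 A0 x 0 1 ((A0 + A0) / 2) = 1.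
    by rewrite /c1n /c2n /x; fs.
  have e2 : - 2 * c3n A0 0 B0 A0 x 0 1 ((A0 + A0) / 2) = 0.
    by rewrite /c3n /x /tau /sig; fs.
  have e3 : c2n A0 0 B0 A0 x 0 1 ((A0 + A0) / 2) - c1n A0 0 B0 A0 x 0 1 ((A0 + A0) / 2) = 1.
    by rewrite /c1n /c2n /x; fs.
  have [M [uM HM HT]] := classify_step o0' c20 e1 e2 e3 P3.
  by exists M, dVIii; split => //; right; right; right; left.
have C0E : C0 = - A0 by apply/eqP; rewrite -addr_eq0 addrC S0.
subst C0.
have [A00|A00] := eqVneq A0 0; last first.
  set y := (B0 / 2) * (a + 1) / (2 * a * A0).
  have e1 : c1n A0 0 B0 (- A0) 0 y A0 1 + c2n A0 0 B0 (- A0) 0 y A0 1 = 1.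
    by rewrite /c1n /c2n /y /tau; fs.
  have e2 : - 2 * c3n A0 0 B0 (- A0) 0 y A0 1 = 0.
    by rewrite /c3n /y /tau /sig; fs.
  have e3 : c2n A0 0 B0 (- A0) 0 y A0 1 - c1n A0 0 B0 (- A0) 0 y A0 1 = -1.
    by rewrite /c1n /c2n /y /tau; fs.
  have [M [uM HM HT]] := classify_step A00 o0' e1 e2 e3 P4.
  by exists M, dVIiii; split => //; right; right; right; right.
subst A0.
have [B00|B00] := eqVneq B0 0; last first.
  have e1 : c1n 0 0 B0 (- 0) 0 0 B0 1 + c2n 0 0 B0 (- 0) 0 0 B0 1 = 0.
    by rewrite /c1n /c2n /tau; fs.
  have e2 : - 2 * c3n 0 0 B0 (- 0) 0 0 B0 1 = 1.
    by rewrite /c3n /tau /sig; fs.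
  have e3 : c2n 0 0 B0 (- 0) 0 0 B0 1 - c1n 0 0 B0 (- 0) 0 0 B0 1 = 0.
    by rewrite /c1n /c2n /tau; fs.
  have [M [uM HM HT]] := classify_step B00 o0' e1 e2 e3 P1.
  by exists M, dII; split => //; right; left.
subst B0.
have e1 : c1n 0 0 0 (- 0) 0 0 1 1 + c2n 0 0 0 (- 0) 0 0 1 1 = 0.
  by rewrite /c1n /c2n /tau; fs.
have e2 : - 2 * c3n 0 0 0 (- 0) 0 0 1 1 = 0.
  by rewrite /c3n /tau /sig; fs.
have e3 : c2n 0 0 0 (- 0) 0 0 1 1 - c1n 0 0 0 (- 0) 0 0 1 1 = 0.
  by rewrite /c1n /c2n /tau; fs.
have [M [uM HM HT]] := classify_step o0' o0' e1 e2 e3 P0.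
by exists M, dI; split => //; left.
Qed.
End Classif.


Lemma auto_eq (F : fieldType) (a : F) (C : 'M[F]_3) i j r : C \in unitmx ->
  sc_eq (chg C (VIc a)) (VIc a) ->
  VIc a i j o0 * C r o0 + VIc a i j o1 * C r o1 + VIc a i j o2 * C r o2 =
  C o0 i * C o0 j * VIc a o0 o0 r + C o0 i * C o1 j * VIc a o0 o1 r + C o0 i * C o2 j * VIc a o0 o2 r
  + (C o1 i * C o0 j * VIc a o1 o0 r + C o1 i * C o1 j * VIc a o1 o1 r + C o1 i * C o2 j * VIc a o1 o2 r)
  + (C o2 i * C o0 j * VIc a o2 o0 r + C o2 i * C o1 j * VIc a o2 o1 r + C o2 i * C o2 j * VIc a o2 o2 r).
Proof. move=> uC H; rewrite -[VIc a i j o0]H -[VIc a i j o1]H -[VIc a i j o2]H contr_a //; exact: sum33. Qed.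


Lemma autoC (F : fieldType) (a : F) (C : 'M[F]_3) :
  a != 0 -> a - 1 != 0 -> a + 1 != 0 -> (2 : F) != 0 ->
  C \in unitmx -> sc_eq (chg C (VIc a)) (VIc a) ->
  [/\ C o0 o0 = 1, C o0 o1 = 0, C o0 o2 = 0, C o1 o1 = C o2 o2 & C o1 o2 = C o2 o1].
Proof.
move=> a0 am1 ap1 two0 uC H.
have a2 : a ^+ 2 - 1 != 0.
  have -> : a ^+ 2 - 1 = (a - 1) * (a + 1) by ring.
  by rewrite mulf_neq0.
have e1 := eq0E (auto_eq o0 o1 o0 uC H).
have e2 := eq0E (auto_eq o2 o0 o0 uC H).
have e3 := eq0E (auto_eq o0 o1 o1 uC H).
have e4 := eq0E (auto_eq o0 o1 o2 uC H).
have e5 := eq0E (auto_eq o0 o2 o1 uC H).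
have e6 := eq0E (auto_eq o0 o2 o2 uC H).
move: e1 e2 e3 e4 e5 e6.
rewrite /VIc /mk_sc /vec3 /= => e1 e2 e3 e4 e5 e6.
have c01 : C o0 o1 = 0.
  apply: (mul_eq0l a2); apply: (comb2 (c1 := - a) (c2 := -1) e1 e2); ring.
have c02 : C o0 o2 = 0.
  apply: (mul_eq0l a2); apply: (comb2 (c1 := 1) (c2 := a) e1 e2); ring.
rewrite c01 c02 in e3 e4 e5 e6.
have := mulmxV uC; set D := invmx C => CD.
have d := fun i j => congr1 (fun M : 'M[F]_3 => M i j) CD.
have d00 := d o0 o0; have d01 := d o0 o1; have d02 := d o0 o2.
have d11 := d o1 o1; have d12 := d o1 o2; have d21 := d o2 o1; have d22 := d o2 o2.
move: d00 d01 d02 d11 d12 d21 d22.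
rewrite !mul3E.
rewrite !mxE /=.
rewrite c01 c02 !mul0r !addr0.
move=> d00 d01 d02 d11 d12 d21 d22.
have k0 : C o0 o0 != 0.
  by apply/eqP => k0; move: d00; rewrite k0 mul0r => /eqP; rewrite eq_sym oner_eq0.
have D01 : D o0 o1 = 0 by apply: (mul_eq0l k0).
have D02 : D o0 o2 = 0 by apply: (mul_eq0l k0).
rewrite D01 D02 !mulr0 !add0r in d11 d12 d21 d22.
have dN0 : C o1 o1 * C o2 o2 - C o1 o2 * C o2 o1 != 0.
  apply/eqP => dN0.
  have : (C o1 o1 * C o2 o2 - C o1 o2 * C o2 o1) * (D o1 o1 * D o2 o2 - D o1 o2 * D o2 o1) = 1.
    transitivity ((C o1 o1 * D o1 o1 + C o1 o2 * D o2 o1) * (C o2 o1 * D o1 o2 + C o2 o2 * D o2 o2)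
      - (C o1 o1 * D o1 o2 + C o1 o2 * D o2 o2) * (C o2 o1 * D o1 o1 + C o2 o2 * D o2 o1)); first by ring.
    by rewrite d11 d12 d21 d22; ring.
  by rewrite dN0 mul0r => /eqP; rewrite eq_sym oner_eq0.
clear d CD d00 d01 d02 d11 d12 d21 d22 D01 D02.
have f11 : (C o0 o0 - 1) * (a + 1) * (C o1 o1 + C o1 o2 + C o2 o1 + C o2 o2) = 0.
  by apply: (comb4 (c1:=1) (c2:=1) (c3:=1) (c4:=1) e3 e4 e5 e6); ring.
have f12 : (C o0 o0 * (a + 1) - (a - 1)) * (C o1 o1 - C o1 o2 + C o2 o1 - C o2 o2) = 0.
  by apply: (comb4 (c1:=1) (c2:=1) (c3:=-1) (c4:=-1) e3 e4 e5 e6); ring.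
have f21 : (C o0 o0 * (a - 1) - (a + 1)) * (C o1 o1 + C o1 o2 - C o2 o1 - C o2 o2) = 0.
  by apply: (comb4 (c1:=1) (c2:=-1) (c3:=1) (c4:=-1) e3 e4 e5 e6); ring.
have f22 : (C o0 o0 - 1) * (a - 1) * (C o1 o1 - C o1 o2 - C o2 o1 + C o2 o2) = 0.
  by apply: (comb4 (c1:=1) (c2:=-1) (c3:=-1) (c4:=1) e3 e4 e5 e6); ring.
have k1 : C o0 o0 = 1.
  apply/eqP; apply: contraT => k1.
  have k1' : C o0 o0 - 1 != 0 by rewrite subr_eq0.
  have n11 := mul_eq0l (mulf_neq0 k1' ap1) f11.
  have n22 := mul_eq0l (mulf_neq0 k1' am1) f22.
  have n4 : (C o1 o1 + C o1 o2 + C o2 o1 + C o2 o2) * (C o1 o1 - C o1 o2 - C o2 o1 + C o2 o2)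
      - (C o1 o1 - C o1 o2 + C o2 o1 - C o2 o2) * (C o1 o1 + C o1 o2 - C o2 o1 - C o2 o2)
      = 4 * (C o1 o1 * C o2 o2 - C o1 o2 * C o2 o1) by ring.
  rewrite n11 n22 mul0r sub0r in n4.
  have n12 : C o1 o1 - C o1 o2 + C o2 o1 - C o2 o2 != 0.
    apply/eqP => h; move: n4; rewrite h mul0r oppr0 => /eqP; rewrite eq_sym mulf_eq0 (negbTE dN0) orbF.
    have -> : (4 : F) = 2 * 2 by rewrite -natrM.
    by rewrite mulf_eq0 (negbTE two0).
  have n21 : C o1 o1 + C o1 o2 - C o2 o1 - C o2 o2 != 0.
    apply/eqP => h; move: n4; rewrite h mulr0 oppr0 => /eqP; rewrite eq_sym mulf_eq0 (negbTE dN0) orbF.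
    have -> : (4 : F) = 2 * 2 by rewrite -natrM.
    by rewrite mulf_eq0 (negbTE two0).
  have g12 : C o0 o0 * (a + 1) - (a - 1) = 0.
    by move/eqP: f12; rewrite mulf_eq0 (negbTE n12) orbF => /eqP.
  have g21 : C o0 o0 * (a - 1) - (a + 1) = 0.
    by move/eqP: f21; rewrite mulf_eq0 (negbTE n21) orbF => /eqP.
  have : (C o0 o0 - 1) * (2 * a) = 0 by apply: (comb2 (c1:=1) (c2:=1) g12 g21); ring.
  by move/eqP; rewrite !mulf_eq0 (negbTE k1') (negbTE two0) (negbTE a0).
rewrite k1 in f12 f21.
have h12 : C o1 o1 - C o1 o2 + C o2 o1 - C o2 o2 = 0.
  by apply: (mul_eq0l two0); rewrite -[RHS]f12; ring.
have h21 : C o1 o1 + C o1 o2 - C o2 o1 - C o2 o2 = 0.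
  by apply: (mul_eq0l two0); apply: (comb1 (c1:=-1) f21); ring.
split => //.
- apply: eq_sub0; apply: (mul_eq0l two0); apply: (comb2 (c1:=1) (c2:=1) h12 h21); ring.
- apply: eq_sub0; apply: (mul_eq0l two0); apply: (comb2 (c1:=-1) (c2:=1) h12 h21); ring.
Qed.


Definition chi (F : comRingType) (g : sc F) (i : 'I_3) := g i o0 o0 + g i o1 o1 + g i o2 o2.

Lemma chi_ext (F : comRingType) (g h : sc F) i : sc_eq g h -> chi g i = chi h i.
Proof. by move=> H; rewrite /chi !H. Qed.

Lemma nz_contra (F : fieldType) (x : F) : x != 0 -> x = 0 -> False.
Proof. by move=> /eqP. Qed.

Lemma chg_comp (R : comUnitRingType) (A B : 'M[R]_3) (f : sc R) i j k :
  A \in unitmx -> B \in unitmx ->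
  chg B (chg A f) i j k = chg (A *m B) f i j k.
Proof.
move=> uA uB; rewrite !chgE invM //.
rewrite !chgTE !chgE !chgTE !mul3E.
ring.
Qed.

Section Uniq.
Variables (F : fieldType) (a : F).
Hypotheses (a0 : a != 0) (am1 : a - 1 != 0) (ap1 : a + 1 != 0) (two0 : (2 : F) != 0).

Lemma chg_dI (M : 'M[F]_3) (g : sc F) : sc_eq g (dI F) -> sc_eq (chg M g) (dI F).
Proof.
move=> H i j k; rewrite chgE chgTE !H /dI /mk_sc /vec3 /=.
by elim/ord3P: i; elim/ord3P: j; elim/ord3P: k; rewrite /=; ring.
Qed.

Lemma uniq_list (C : 'M[F]_3) (ft ft2 : sc F) : C \in unitmx ->
  sc_eq (chg C (VIc a)) (VIc a) -> inlist a ft -> inlist a ft2 ->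
  sc_eq ft2 (chg (invmx C)^T ft) -> sc_eq ft2 ft.
Proof.
move=> uC HC L1 L2 H.
have [c00 c01 c02 c11 c12] := autoC a0 am1 ap1 two0 uC HC.
have uN : (invmx C)^T \in unitmx by rewrite unitmx_tr unitmx_inv.
have R1 i : chi ft2 i = invmx C i o0 * chi ft o0 + invmx C i o1 * chi ft o1 + invmx C i o2 * chi ft o2.
  by rewrite (chi_ext i H) /chi chi_chg // !mxE.
have R2 j : chi ft j = C j o0 * chi ft2 o0 + C j o1 * chi ft2 o1 + C j o2 * chi ft2 o2.
  rewrite !R1.
  transitivity (chi ft o0 * (C j o0 * invmx C o0 o0 + C j o1 * invmx C o1 o0 + C j o2 * invmx C o2 o0)
              + chi ft o1 * (C j o0 * invmx C o0 o1 + C j o1 * invmx C o1 o1 + C j o2 * invmx C o2 o1)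
              + chi ft o2 * (C j o0 * invmx C o0 o2 + C j o1 * invmx C o1 o2 + C j o2 * invmx C o2 o2)); last by ring.
  by rewrite !id3E //; elim/ord3P: j => /=; ring.
have Z1 : sc_eq ft (dI F) -> sc_eq ft2 (dI F).
  by move=> H1; apply: sc_trans H _; apply: chg_dI.
have Z2 : sc_eq ft2 (dI F) -> sc_eq ft (dI F).
  move=> H2 i j k.
  have E : (invmx C)^T *m C^T = 1%:M by rewrite -trmx_mul mulmxV // trmx1.
  have Hs : sc_eq ft2 (chg (invmx C)^T ft) := H.
  rewrite -(chg_id ft) -E -chg_comp ?unitmx_tr ?unitmx_inv //.
  have Hs' : sc_eq (chg (invmx C)^T ft) ft2 by move=> ? ? ?; rewrite H.
  by rewrite (chg_ext C^T Hs') (chg_dI C^T H2).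
have c11' := c11; have c12' := c12.
have sg1 : (a + 1) / (a - 1) - 1 = 2 / (a - 1) by fs.
have four0 : (2 * 2 : F) != 0 by rewrite mulf_neq0.
have four1 : (4 : F) != 0 by have -> : (4 : F) = 2 * 2 by rewrite -natrM.
case: L1 => [H1|[H1|[[b [b0 H1]]|[H1|H1]]]]; case: L2 => [H2|[H2|[[b2 [b20 H2]]|[H2|H2]]]].
- by move=> i j k; rewrite H1 H2.
- have := Z1 H1 o1 o2 o0; rewrite H2 /dI /dII /mk_sc /vec3 /= => /eqP; by rewrite oner_eq0.
- have := Z1 H1 o0 o1 o2; rewrite H2 /dI /dVIi /mk_sc /vec3 /= => /eqP; by rewrite oppr_eq0 (negbTE b20).
- have := Z1 H1 o0 o1 o0; rewrite H2 /dI /dVIii /mk_sc /vec3 /= => /eqP; by rewrite oner_eq0.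
- have := Z1 H1 o0 o1 o0; rewrite H2 /dI /dVIiii /mk_sc /vec3 /= => /eqP; by rewrite oner_eq0.
- have := Z2 H2 o1 o2 o0; rewrite H1 /dI /dII /mk_sc /vec3 /= => /eqP; by rewrite oner_eq0.
- by move=> i j k; rewrite H1 H2.
- have X := eq0E (R2 o0); rewrite /chi !H1 !H2 /dII /dVIi /mk_sc /vec3 /= c00 c01 c02 in X.
  by exfalso; apply: (nz_contra b20); apply: (comb1 (c1 := a / 2) X); fs.
- have X := eq0E (R1 o1); rewrite /chi !H1 !H2 /dII /dVIii /mk_sc /vec3 /= in X.
  by exfalso; apply: (nz_contra (oner_neq0 F)); apply: (comb1 (c1 := (a - 1) / 2) X); fs.
- have X := eq0E (R1 o1); rewrite /chi !H1 !H2 /dII /dVIiii /mk_sc /vec3 /= in X.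
  by exfalso; apply: (nz_contra (oner_neq0 F)); apply: (comb1 (c1 := - (a + 1) / 2) X); fs.
- have := Z2 H2 o0 o1 o2; rewrite H1 /dI /dVIi /mk_sc /vec3 /= => /eqP; by rewrite oppr_eq0 (negbTE b0).
- have X := eq0E (R2 o0); rewrite /chi !H1 !H2 /dII /dVIi /mk_sc /vec3 /= c00 c01 c02 in X.
  by exfalso; apply: (nz_contra b0); apply: (comb1 (c1 := - a / 2) X); fs.
- have X := eq0E (R2 o0); rewrite /chi !H1 !H2 /dVIi /mk_sc /vec3 /= c00 c01 c02 in X.
  have bb : b2 = b.
    by apply: eq_sub0; apply: (comb1 (c1 := a / 2) X); fs.
  by move=> i j k; rewrite H1 H2 bb.
- have X := eq0E (R2 o0); rewrite /chi !H1 !H2 /dVIi /dVIii /mk_sc /vec3 /= c00 c01 c02 in X.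
  by exfalso; apply: (nz_contra b0); apply: (comb1 (c1 := - a / 2) X); fs.
- have X := eq0E (R2 o0); rewrite /chi !H1 !H2 /dVIi /dVIiii /mk_sc /vec3 /= c00 c01 c02 in X.
  by exfalso; apply: (nz_contra b0); apply: (comb1 (c1 := - a / 2) X); fs.
- have := Z2 H2 o0 o1 o0; rewrite H1 /dI /dVIii /mk_sc /vec3 /= => /eqP; by rewrite oner_eq0.
- have X := eq0E (R2 o1); rewrite /chi !H1 !H2 /dII /dVIii /mk_sc /vec3 /= in X.
  by exfalso; apply: (nz_contra (oner_neq0 F)); apply: (comb1 (c1 := (a - 1) / 2) X); fs.
- have X := eq0E (R2 o0); rewrite /chi !H1 !H2 /dVIi /dVIii /mk_sc /vec3 /= c00 c01 c02 in X.
  by exfalso; apply: (nz_contra b20); apply: (comb1 (c1 := a / 2) X); fs.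
- by move=> i j k; rewrite H1 H2.
- have X1 := eq0E (R2 o1); have X2 := eq0E (R2 o2).
  rewrite /chi !H1 !H2 /dVIii /dVIiii /mk_sc /vec3 /= c11 c12 in X1 X2.
  by exfalso; apply: (nz_contra (oner_neq0 F)); apply: (comb2 (c1 := (a - 1) / (2 * 2)) (c2 := - ((a - 1) / (2 * 2))) X1 X2); fs.
- have := Z2 H2 o0 o1 o0; rewrite H1 /dI /dVIiii /mk_sc /vec3 /= => /eqP; by rewrite oner_eq0.
- have X := eq0E (R2 o1); rewrite /chi !H1 !H2 /dII /dVIiii /mk_sc /vec3 /= in X.
  by exfalso; apply: (nz_contra (oner_neq0 F)); apply: (comb1 (c1 := - (a + 1) / 2) X); fs.
- have X := eq0E (R2 o0); rewrite /chi !H1 !H2 /dVIi /dVIiii /mk_sc /vec3 /= c00 c01 c02 in X.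
  by exfalso; apply: (nz_contra b20); apply: (comb1 (c1 := a / 2) X); fs.
- have X1 := eq0E (R2 o1); have X2 := eq0E (R2 o2).
  rewrite /chi !H1 !H2 /dVIii /dVIiii /mk_sc /vec3 /= c11 c12 in X1 X2.
  by exfalso; apply: (nz_contra (oner_neq0 F)); apply: (comb2 (c1 := - (a + 1) / (2 * 2)) (c2 := - (a + 1) / (2 * 2)) X1 X2); fs.
- by move=> i j k; rewrite H1 H2.
Qed.
End Uniq.


Lemma dbr_ext (R : comRingType) (f1 f2 g : sc R) (x y : dbl R) :
  sc_eq f1 f2 -> dbr f1 g x y = dbr f2 g x y.
Proof.
move=> H; congr pair; apply/rowP => k.
- by rewrite !dbr1E !H.
- by rewrite !dbr2E !H.
Qed.

Lemma manin_ext (R : comRingType) (f1 f2 g : sc R) :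
  sc_eq f1 f2 -> is_manin f1 g -> is_manin f2 g.
Proof.
move=> H [H0 HJ]; split.
- by move=> x; rewrite -(@dbr_ext _ f1 f2 g _ _ H).
- by move=> x y z; rewrite -!(@dbr_ext _ f1 f2 g _ _ H).
Qed.

Lemma sc_sym (R : ringType) (f g : sc R) : sc_eq f g -> sc_eq g f.
Proof. by move=> H i j k; rewrite H. Qed.
Lemma sc_tr (R : ringType) (f g h : sc R) : sc_eq f g -> sc_eq g h -> sc_eq f h.
Proof. by move=> H1 H2 i j k; rewrite H1 H2. Qed.

Lemma invT_mul (R : comUnitRingType) (A B : 'M[R]_3) : A \in unitmx -> B \in unitmx ->
  (invmx (A *m B))^T = (invmx A)^T *m (invmx B)^T.
Proof. by move=> uA uB; rewrite invM // trmx_mul. Qed.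

Lemma iso_comp (R : comUnitRingType) (A B : 'M[R]_3) (f ft g gt h ht : sc R) :
  A \in unitmx -> B \in unitmx ->
  sc_eq (chg A f) g -> sc_eq (chg (invmx A)^T ft) gt ->
  sc_eq (chg B g) h -> sc_eq (chg (invmx B)^T gt) ht ->
  sc_eq (chg (A *m B) f) h /\ sc_eq (chg (invmx (A *m B))^T ft) ht.
Proof.
move=> uA uB H1 H2 H3 H4; split => i j k.
- by rewrite -chg_comp // (chg_ext B H1) H3.
- rewrite invT_mul // -chg_comp ?unitmx_tr ?unitmx_inv //.
  by rewrite (chg_ext _ H2) H4.
Qed.

Theorem mainTheorem5 (R : realType) (a : R) (ha0 : 0 < a) (ha1 : a != 1)
    (f' ft' : sc R) :
  is_manin f' ft' -> lie_iso f' (bianchiVIa a) ->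
  exists ft : sc R,
    in_dual_list a ft /\ manin_iso f' ft' (bianchiVIa a) ft /\
    (forall ft2 : sc R, in_dual_list a ft2 ->
       manin_iso f' ft' (bianchiVIa a) ft2 -> sc_eq ft2 ft).
Proof.
move=> HM [A0 [uA0 HA0]].
have a0 : a != 0 by rewrite gt_eqF.
have am1 : a - 1 != 0 by rewrite subr_eq0.
have ap1 : a + 1 != 0 by rewrite gt_eqF // addr_gt0.
have two0 : (2 : R) != 0 by rewrite pnatr_eq0.
have a2 := am2 am1 ap1.
rewrite VIcE in HA0 *.
set g := chg (invmx A0)^T ft'.
have Hg : is_manin (VIc a) g := manin_ext HA0 (manin_transfer uA0 HM).
have gE := g_param Hg.1.
have [[h1 h2 h3 h4] [h5 h6]] := VI_eqs Hg gE.
move: gE h1 h2 h3 h4 h5 h6.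
move: (g o0 o1 o0) (g o0 o1 o1) (g o0 o1 o2) (g o1 o2 o0) (g o1 o2 o1) (g o1 o2 o2)
      (g o2 o0 o0) (g o2 o0 o1) (g o2 o0 o2) => A0v A1v A2v B0v B1v B2v C0v C1v C2v.
move=> gE h1 h2 h3 h4 h5 h6.
have e3 : A2v = a * A1v by apply: eq_sub0; apply: (mul_eq0l two0); rewrite mulrC.
have e5 : B1v = B1f a A0v C0v.
  rewrite /B1f; apply: (mulIf a2); rewrite mulfVK //.
  by apply: eq_sub0; apply: (comb1 (c1 := -1) h5); ring.
have gP : sc_eq g (Pg a A0v A1v B0v C0v).
  by apply: (sc_tr gE); rewrite /Pg h1 h2 h4 e3 e5.
have J : a * (A0v ^+ 2 - C0v ^+ 2) = (a ^+ 2 - 1) * A1v * B0v.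
  apply: eq_sub0; apply: (mul_eq0l two0).
  apply: (comb1 (c1 := a ^+ 2 - 1) h6).
  rewrite h2 h4 e5 /B1f; field; by rewrite a2.
have [M [T [uM HMv HT LT]]] := classify a0 am1 ap1 two0 J.
have [iso1 iso2] := iso_comp uA0 uM HA0 (fun i j k => erefl (g i j k)) HMv (sc_tr (chg_ext _ gP) HT).
exists T; split; first exact: LT.
split; first by exists (A0 *m M); split => //; rewrite unitmx_mul uA0.
move=> ft2 L2 [A2 [uA2 [HA2 HA2t]]].
have uA1 : A0 *m M \in unitmx by rewrite unitmx_mul uA0.
set A1 := A0 *m M in uA1 iso1 iso2.
set C := invmx A1 *m A2.
have uC : C \in unitmx by rewrite unitmx_mul unitmx_inv uA1.
have A1C : A1 *m C = A2 by rewrite /C mulmxA mulmxV // mul1mx.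
have HC : sc_eq (chg C (VIc a)) (VIc a).
  move=> i j k; rewrite -(chg_ext C iso1) chg_comp // A1C.
  by rewrite -VIcE HA2.
have H2 : sc_eq ft2 (chg (invmx C)^T T).
  move=> i j k; rewrite -(chg_ext _ iso2) chg_comp ?unitmx_tr ?unitmx_inv //.
  rewrite -invT_mul // A1C.
  by rewrite HA2t.
exact: (uniq_list a0 am1 ap1 two0 uC HC LT L2 H2).
Qed.
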